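(* Suppose that for every admissible set $\mathcal{H}$ with $|\mathcal{H}| = 3$, the difference set $\mathcal{D}(\mathcal{H})$ contains a weak Polignac number. Then \[ \liminf_{x \to \infty} \frac{\mathcal{P}(x)}{x} \;\geq\; \frac{1}{6}. \]
   Context: A positive integer $d$ is a weak Polignac number if there are infinitely many pairs of primes $(p,q)$ with $q - p = d$. For real $x$, $\mathcal{P}(x)$ denotes the number of weak Polignac numbers less than or equal to $x$. A finite set of integers $\mathcal{H} = \{h_1, \ldots, h_k\}$ is admissible if for every prime $p$ there is an integer $m$ with $h_i \not\equiv m \pmod p$ for all $1 \le i \le k$. Its difference set is $\mathcal{D}(\mathcal{H}) = \{h_j - h_i : h_i, h_j \in \mathcal{H},\ h_i < h_j\}$. *)

(* Defs.v *)
From Stdlib Require Import Reals ZArith Znumtheory List Classical ClassicalEpsilon.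
Import ListNotations.
Open Scope R_scope.

(* Since q = p + d is
   determined by p, infinitely many pairs <-> unboundedly large such p. *)
Definition weak_polignac (d : nat) : Prop :=
  (0 < d)%nat /\
  forall N : nat, exists p : nat,
    (N <= p)%nat /\ prime (Z.of_nat p) /\ prime (Z.of_nat p + Z.of_nat d)%Z.

Definition decP (P : Prop) : bool :=
  if excluded_middle_informative P then true else false.

(* P(x) = number of weak Polignac numbers d with d <= x.
   Every positive integer d <= x lies in [1, up x), which the list covers. *)
Definition polignac_count (x : R) : nat :=
  length (filter (fun d => decP (weak_polignac d /\ INR d <= x))
                 (seq 1 (Z.to_nat (up x)))).

Definition admissible (H : list Z) : Prop :=
  forall p : Z, prime p ->
    exists m : Z, forall h : Z, In h H -> ~ (p | h - m)%Z.

Definition in_diff_set (H : list Z) (n : Z) : Prop :=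
  exists hi hj : Z, In hi H /\ In hj H /\ (hi < hj)%Z /\ n = (hj - hi)%Z.

(* Main.v *)
Require Import Defs.
From Stdlib Require Import Reals ZArith Znumtheory List Lia Lra Classical ClassicalEpsilon FinFun.
Import ListNotations.
Open Scope R_scope.

Lemma decP_true (P : Prop) : decP P = true <-> P.
Proof. unfold decP; destruct excluded_middle_informative; split; intros; try tauto; discriminate. Qed.
Lemma decP_T (P : Prop) : decP P = true -> P.
Proof. apply decP_true. Qed.
Lemma T_decP (P : Prop) : P -> decP P = true.
Proof. apply decP_true. Qed.

Lemma count_lb (x : R) (g : nat -> nat) (K : nat) :
  (forall a b, g a = g b -> a = b) ->
  (forall a, (1 <= a <= K)%nat -> (1 <= g a)%nat /\ INR (g a) <= x) ->
  (length (filter (fun a => decP (weak_polignac (g a))) (seq 1 K)) <= polignac_count x)%nat.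
Proof.
  intros Hinj Hr. unfold polignac_count.
  rewrite <- (length_map g).
  apply NoDup_incl_length.
  - apply FinFun.Injective_map_NoDup; [exact Hinj|].
    apply NoDup_filter, seq_NoDup.
  - intros y Hy. apply in_map_iff in Hy as [a [<- Ha]].
    apply filter_In in Ha as [Ha Hp]. apply in_seq in Ha.
    apply decP_T in Hp.
    destruct (Hr a ltac:(lia)) as [H1 H2].
    apply filter_In; split.
    + apply in_seq. destruct (archimed x) as [Hu _].
      assert (Z.of_nat (g a) < up x)%Z.
      { apply lt_IZR. rewrite <- INR_IZR_INZ. lra. }
      lia.
    + apply T_decP. auto.
Qed.

Lemma len_or (f h : nat -> bool) (l : list nat) :
  (forall a, In a l -> f a = true \/ h a = true) ->
  (length l <= length (filter f l) + length (filter h l))%nat.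
Proof.
  induction l as [|b l IH]; simpl; intros Hl; [lia|].
  assert (IH' := IH (fun a Ha => Hl a (or_intror Ha))).
  destruct (Hl b (or_introl eq_refl)) as [E|E]; rewrite E;
  destruct (f b), (h b); simpl; lia.
Qed.

Lemma nat_floor (y : R) : 0 <= y -> exists K : nat, INR K <= y /\ y - 1 < INR K.
Proof.
  intros Hy. destruct (archimed y) as [H1 H2].
  assert (0 < up y)%Z by (apply lt_IZR; simpl; lra).
  exists (Z.to_nat (up y - 1)).
  rewrite INR_IZR_INZ, Z2Nat.id by lia. rewrite minus_IZR. simpl. lra.
Qed.

Lemma blocked (p h m1 m2 : Z) : (4 <= p)%Z -> (0 <= m1 < m2)%Z -> (m2 <= 3)%Z ->
  (p | h - m1)%Z -> (p | h - m2)%Z -> False.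
Proof.
  intros Hp Hm Hm2 D1 D2.
  assert (D : (p | m2 - m1)%Z).
  { replace (m2 - m1)%Z with ((h - m1) - (h - m2))%Z by ring. apply Z.divide_sub_r; auto. }
  apply Z.divide_pos_le in D; lia.
Qed.

Lemma adm3 (a c : Z) : admissible [0%Z; (2*a)%Z; (2*a + 6*c)%Z].
Proof.
  intros p Hp.
  assert (Hp2 : (2 <= p)%Z) by (destruct Hp; lia).
  destruct (Z.eq_dec p 2) as [->|N2].
  { exists 1%Z. intros h Hh [z Hz]. cbn [In] in Hh.
    destruct Hh as [<-|[<-|[<-|[]]]]; lia. }
  destruct (Z.eq_dec p 3) as [->|N3].
  { destruct (Zdivide_dec 3 a) as [[k Hk]|Hn].
    - exists 1%Z. intros h Hh [z Hz]. cbn [In] in Hh.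
      destruct Hh as [<-|[<-|[<-|[]]]]; lia.
    - exists a. intros h Hh [z Hz]. cbn [In] in Hh. apply Hn.
      destruct Hh as [<-|[<-|[<-|[]]]].
      + exists (-z)%Z; lia.
      + exists z; lia.
      + exists (z - 2*c)%Z; lia. }
  assert (Hp4 : (4 <= p)%Z) by lia.
  apply NNPP. intro Hno.
  assert (B : forall m, exists h, In h [0%Z; (2*a)%Z; (2*a + 6*c)%Z] /\ (p | h - m)%Z).
  { intro m. apply NNPP. intro Hm. apply Hno. exists m. intros h Hh D. apply Hm. eauto. }
  destruct (B 0%Z) as [h0 [I0 D0]], (B 1%Z) as [h1 [I1 D1]],
           (B 2%Z) as [h2 [I2 D2]], (B 3%Z) as [h3 [I3 D3]].
  cbn [In] in I0, I1, I2, I3.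
  destruct I0 as [<-|[<-|[<-|[]]]]; destruct I1 as [<-|[<-|[<-|[]]]];
  try (eapply (blocked p _ 0 1); eauto; lia);
  destruct I2 as [<-|[<-|[<-|[]]]];
  try (eapply (blocked p _ 0 2); eauto; lia);
  try (eapply (blocked p _ 1 2); eauto; lia);
  destruct I3 as [<-|[<-|[<-|[]]]];
  try (eapply (blocked p _ 0 3); eauto; lia);
  try (eapply (blocked p _ 1 3); eauto; lia);
  try (eapply (blocked p _ 2 3); eauto; lia).
Qed.

Lemma trip :
  (forall H : list Z, NoDup H -> length H = 3%nat -> admissible H ->
     exists d : nat, weak_polignac d /\ in_diff_set H (Z.of_nat d)) ->
  forall a c : nat, (1 <= a)%nat -> (1 <= c)%nat ->
  weak_polignac (2*a) \/ weak_polignac (2*a+6*c) \/ weak_polignac (6*c).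
Proof.
  intros Hyp a c Ha Hc.
  destruct (Hyp [0%Z; (2*Z.of_nat a)%Z; (2*Z.of_nat a + 6*Z.of_nat c)%Z])
    as [d [Hd [hi [hj [Ii [Ij [Hlt Heq]]]]]]].
  - constructor; [cbn [In]; intuition lia|].
    constructor; [cbn [In]; intuition lia|].
    constructor; [cbn [In]; intuition lia|]. constructor.
  - reflexivity.
  - apply adm3.
  - cbn [In] in Ii, Ij.
    destruct Ii as [<-|[<-|[<-|[]]]]; destruct Ij as [<-|[<-|[<-|[]]]]; try lia.
    + left. replace (2*a)%nat with d by lia. exact Hd.
    + right; left. replace (2*a+6*c)%nat with d by lia. exact Hd.
    + right; right. replace (6*c)%nat with d by lia. exact Hd.
Qed.

Theorem mainTheorem3 :
  (forall H : list Z, NoDup H -> length H = 3%nat -> admissible H ->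
     exists d : nat, weak_polignac d /\ in_diff_set H (Z.of_nat d)) ->
  (* liminf_{x -> oo} P(x)/x >= 1/6 *)
  forall eps : R, 0 < eps ->
    exists N : R, forall x : R, N <= x ->
      1 / 6 - eps <= INR (polignac_count x) / x.
Proof.
  intros Hyp eps Heps.
  destruct (classic (forall c, (1 <= c)%nat -> weak_polignac (6*c))) as [HA|HB].
  - exists (1/eps + 1). intros x Hx.
    assert (Hx0 : 0 < x).
    { assert (0 < 1/eps) by (apply Rdiv_lt_0_compat; lra). lra. }
    destruct (nat_floor (x/6)) as [K [K1 K2]]; [lra|].
    assert (Hc := count_lb x (fun c => 6*c)%nat K).
    assert (Hf : filter (fun a => decP (weak_polignac (6*a))) (seq 1 K) = seq 1 K).
    { apply forallb_filter_id, forallb_forall. intros a Ha. apply in_seq in Ha.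
      apply T_decP, HA; lia. }
    cbv beta in Hc; rewrite Hf, length_seq in Hc.
    assert (HK : (K <= polignac_count x)%nat).
    { apply Hc.
      - intros u v; lia.
      - intros a Ha. split; [lia|]. rewrite mult_INR.
        assert (INR a <= INR K) by (apply le_INR; lia). simpl. lra. }
    apply le_INR in HK.
    assert (1/eps * eps = 1) by (field; lra).
    assert (x * eps >= 1) by nra.
    apply Rmult_le_reg_r with x; [lra|].
    unfold Rdiv at 2. rewrite Rmult_assoc, Rinv_l, Rmult_1_r by lra.
    nra.
  - apply not_all_ex_not in HB as [c Hc].
    apply imply_to_and in Hc as [Hc1 Hc2].
    exists (INR (18*c+6) + 1). intros x Hx.
    assert (Hc6 : INR (6*c) <= INR (18*c+6)) by (apply le_INR; lia).
    assert (H0 : 0 <= INR (6*c)) by apply pos_INR.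
    assert (Hx0 : 0 < x) by lra.
    destruct (nat_floor ((x - INR (6*c))/2)) as [K [K1 K2]]; [lra|].
    assert (HL := len_or (fun a => decP (weak_polignac (2*a)))
                         (fun a => decP (weak_polignac (2*a+6*c))) (seq 1 K)).
    rewrite length_seq in HL.
    assert (HLs : (K <= length (filter (fun a => decP (weak_polignac (2*a))) (seq 1 K))
             + length (filter (fun a => decP (weak_polignac (2*a+6*c))) (seq 1 K)))%nat).
    { apply HL. intros a Ha. apply in_seq in Ha.
      destruct (trip Hyp a c ltac:(lia) Hc1) as [W|[W|W]].
      - left; apply T_decP; exact W.
      - right; apply T_decP; exact W.
      - contradiction. }
    assert (Hr : forall a, (1 <= a <= K)%nat -> INR (2*a+6*c) <= x).
    { intros a Ha. rewrite plus_INR, !mult_INR. rewrite mult_INR in K1.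
      assert (INR a <= INR K) by (apply le_INR; lia). simpl in *. lra. }
    assert (C1 := count_lb x (fun a => 2*a)%nat K).
    assert (C2 := count_lb x (fun a => 2*a+6*c)%nat K).
    assert (Hs : (K <= 2 * polignac_count x)%nat).
    { assert (A1 : (length (filter (fun a => decP (weak_polignac (2*a))) (seq 1 K))
                  <= polignac_count x)%nat).
      { apply C1; [intros u v; lia|]. intros a Ha. split; [lia|].
        assert (INR (2*a) <= INR (2*a+6*c)) by (apply le_INR; lia).
        specialize (Hr a Ha). lra. }
      assert (A2 : (length (filter (fun a => decP (weak_polignac (2*a+6*c))) (seq 1 K))
                  <= polignac_count x)%nat).
      { apply C2; [intros u v; lia|]. intros a Ha. split; [lia|]. auto. }
      lia. }
    apply le_INR in Hs. rewrite mult_INR in Hs. simpl in Hs.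
    rewrite mult_INR in Hc6, H0. rewrite plus_INR, mult_INR in Hx, Hc6.
    simpl in Hx, Hc6, H0.
    apply Rmult_le_reg_r with x; [lra|].
    unfold Rdiv at 2. rewrite Rmult_assoc, Rinv_l, Rmult_1_r by lra.
    assert (0 <= INR c) by apply pos_INR.
    assert (eps * x > 0) by nra.
    rewrite mult_INR in K1, K2. simpl in K1, K2.
    nra.
Qed.
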